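(* For GP-EI with BSPMI and any $t\in\mathbb{N}$, when $E^r(t)$ holds, $$r_t\le\big(c_\mu(t)+\phi(0)+2\beta_t^{1/2}\big)\sigma_{t-1}(\mathbf{x}_t)+c_\alpha\beta_t^{1/2}\sigma_{t-1}([\mathbf{x}^*]_t)+\frac{1}{t^2},$$ where $c_\mu(t)=\log^{1/2}\!\big(\frac{t-1+\sigma^2}{2\pi\phi^2(0)\sigma^2}\big)$ and $c_\alpha=1.328$.
   Context: Setting: $d\ge1$, $r>0$, $C\subseteq[0,r]^d$ compact; $k$ positive semidefinite kernel with $k(\mathbf{x},\mathbf{x}')\le1$, $k(\mathbf{x},\mathbf{x})=1$ on $C$. $f$ is a sample path of $GP(0,k)$, Lipschitz with constant $L\ge1/(rd)$ in $\ell_1$-norm; $\mathbf{x}^*\in\arg\min_Cf$. Observations $y_t=f(\mathbf{x}_t)+\epsilon_t$, $\epsilon_t$ i.i.d. $\mathcal{N}(0,\sigma^2)$, $\sigma>0$. Posterior $\mu_t(\mathbf{x})=\mathbf{k}_t(\mathbf{x})^T(\mathbf{K}_t+\sigma^2\mathbf{I})^{-1}\mathbf{y}_{1:t}$, $\sigma_t^2(\mathbf{x})=1-\mathbf{k}_t(\mathbf{x})^T(\mathbf{K}_t+\sigma^2\mathbf{I})^{-1}\mathbf{k}_t(\mathbf{x})$ ($\mathbf{K}_t=[k(\mathbf{x}_i,\mathbf{x}_j)]_{i,j\le t}$, $\mathbf{k}_t(\mathbf{x})=[k(\mathbf{x}_i,\mathbf{x})]_{i\le t}$). BSPMI incumbent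 $\xi_t^+=\mu_t^m=\min_{i\le t}\mu_t(\mathbf{x}_i)$. $EI_t(\mathbf{x})=(\xi_t^+-\mu_t(\mathbf{x}))\Phi(z_t(\mathbf{x}))+\sigma_t(\mathbf{x})\phi(z_t(\mathbf{x}))$, $z_t=(\xi_t^+-\mu_t)/\sigma_t$, $\phi,\Phi$ standard normal pdf/cdf; GP-EI picks $\mathbf{x}_t\in\arg\max_CEI_{t-1}$. $r_t=f(\mathbf{x}_t)-f(\mathbf{x}^* )$. Discretization: $\mathbb{C}_t\subseteq C$ finite, $|\mathbb{C}_t|=(Lrdt^2)^d$, $\|\mathbf{x}-[\mathbf{x}]_t\|_1\le1/(Lt^2)$ for all $\mathbf{x}\in C$, $[\mathbf{x}]_t$ a closest point of $\mathbb{C}_t$. With $\delta\in(0,1)$, $\pi_t=\pi^2t^2/6$, $\beta_t=2\log(8|\mathbb{C}_t|\pi_t/\delta)$. $E^r(t)$ is the event that $|f(\mathbf{x})-\mu_{t-1}(\mathbf{x})|\le\beta_t^{1/2}\sigma_{t-1}(\mathbf{x})$ holds for all $\mathbf{x}\in\mathbb{C}_t$, for $\mathbf{x}=\mathbf{x}_t$, and for $\mathbf{x}=\mathbf{x}_{t-1}$. *)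

(* Defs.v *)
From HB Require Import structures.
From mathcomp Require Import all_boot all_order all_algebra.
From mathcomp Require Import all_classical all_reals all_analysis.
Set Implicit Arguments. Unset Strict Implicit. Unset Printing Implicit Defensive.
Import Order.TTheory GRing.Theory Num.Theory.
Import numFieldNormedType.Exports.
Local Open Scope classical_set_scope.
Local Open Scope ring_scope.

Section GPEI.
Context {R : realType} {d : nat}.

Notation pt := 'rV[R]_d.

Definition l1dist (x x' : pt) : R := \sum_(i < d) `|x 0 i - x' 0 i|.

Definition phi (z : R) : R := normal_pdf 0 1 z.
Definition Phi (z : R) : R := fine (normal_prob 0 1 `]-oo, z]).

Definition psd_kernel (k : pt -> pt -> R) : Prop :=
  (forall x x', k x x' = k x' x) /\
  (forall (n : nat) (X : 'I_n -> pt) (c : 'I_n -> R),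
      0 <= \sum_(i < n) \sum_(j < n) c i * c j * k (X i) (X j)).

(* Data after n observations: points X 1, ..., X n, observations y 1, ..., y n *)
Definition kvec (k : pt -> pt -> R) (X : nat -> pt) (n : nat) (x : pt) : 'cV[R]_n :=
  \col_(i < n) k (X i.+1) x.
Definition Kmat (k : pt -> pt -> R) (X : nat -> pt) (n : nat) : 'M[R]_n :=
  \matrix_(i < n, j < n) k (X i.+1) (X j.+1).
Definition yvec (y : nat -> R) (n : nat) : 'cV[R]_n := \col_(i < n) y i.+1.

Definition post_mean k (sigma : R) X y n (x : pt) : R :=
  (((kvec k X n x)^T *m invmx (Kmat k X n + (sigma ^+ 2)%:M)) *m yvec y n) 0 0.
Definition post_var k (sigma : R) X n (x : pt) : R :=
  1 - (((kvec k X n x)^T *m invmx (Kmat k X n + (sigma ^+ 2)%:M)) *m kvec k X n x) 0 0.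
Definition post_sd k sigma X n x : R := Num.sqrt (post_var k sigma X n x).

(* BSPMI incumbent xi_n^+ = min_{1<=i<=n} mu_n(x_i)   (used for n >= 1) *)
Definition incumbent k sigma X y n : R :=
  \big[Num.min/post_mean k sigma X y n (X 1%N)]_(1 <= i < n.+1)
     post_mean k sigma X y n (X i).

Definition EI k sigma X y n (x : pt) : R :=
  let xi := incumbent k sigma X y n in
  let m := post_mean k sigma X y n x in
  let s := post_sd k sigma X n x in
  let z := (xi - m) / s in
  (xi - m) * Phi z + s * phi z.

Definition pi_t (t : nat) : R := pi ^+ 2 * (t%:R) ^+ 2 / 6.
Definition beta (card : nat) (delta : R) (t : nat) : R :=
  2 * ln (8 * card%:R * pi_t t / delta).

Definition c_mu (sigma : R) (t : nat) : R :=
  Num.sqrt (ln ((t%:R - 1 + sigma ^+ 2) / (2 * pi * phi 0 ^+ 2 * sigma ^+ 2))).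
Definition c_alpha : R := 1328%:R / 1000%:R.

End GPEI.

(* Main.v *)
Require Import Defs.
From HB Require Import structures.
From mathcomp Require Import all_boot all_order all_algebra.
From mathcomp Require Import all_classical all_reals all_analysis.
From mathcomp Require Import ring lra.
Import Order.TTheory GRing.Theory Num.Theory.
Import numFieldNormedType.Exports.
Local Open Scope classical_set_scope.
Local Open Scope ring_scope.

Section Mat.
Variable R : realType.

Lemma sum_sq_le n (u : 'I_n -> R) :
  (\sum_i u i) ^+ 2 <= n%:R * \sum_i u i ^+ 2.
Proof.
elim: n u => [|n IH] u; first by rewrite !big_ord0 expr0n /= mul0r.
rewrite !big_ord_recr /=.
have := IH (fun i => u (widen_ord (leqnSn n) i)).
set S := \sum_(i < n) _; set Q := \sum_(i < n) _ => HS.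
have Q0 : 0 <= Q by rewrite /Q sumr_ge0 // => i _; rewrite sqr_ge0.
have n0 : 0 <= n%:R :> R by rewrite ler0n.
set v := u ord_max.
rewrite -natr1.
have h1 : 0 <= (S - n%:R * v) ^+ 2 by rewrite sqr_ge0.
case: (posnP n) => [n0'|np].
  have S0 : S = 0.
    by apply/eqP; rewrite -sqrf_eq0 eq_le sqr_ge0 andbT; move: HS; rewrite n0' mul0r.
  rewrite S0 n0' /=; lra.
have np' : 0 < n%:R :> R by rewrite ltr0n.
have key : 2 * S * v <= Q + n%:R * v ^+ 2.
  rewrite -(ler_pM2l np'); nra.
nra.
Qed.
Lemma quad_form n (K : 'M[R]_n) (u : 'cV_n) (s2 : R) :
 ((u^T *m (K + s2%:M)) *m u) 0 0 =
   \sum_i \sum_j u i 0 * u j 0 * K i j + s2 * \sum_i u i 0 ^+ 2.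
Proof.
rewrite mxE.
transitivity (\sum_j \sum_i (u i 0 * u j 0 * K i j + s2 * ((i == j)%:R * u i 0 * u j 0))).
  apply: eq_bigr => j _; rewrite mxE mulr_suml; apply: eq_bigr => i _.
  rewrite !mxE; case: eqP => [->|_]; rewrite /=; ring.
under eq_bigr do rewrite big_split /=.
rewrite big_split /= exchange_big /=; congr (_ + _).
rewrite exchange_big /= mulr_sumr; apply: eq_bigr => i _.
rewrite (bigD1 i) //= eqxx big1 ?addr0; first by rewrite mul1r expr2.
by move=> j /negPf; rewrite eq_sym => ->; rewrite !mul0r mulr0.
Qed.
Variable d : nat.
Lemma psd_ext (k : 'rV[R]_d -> 'rV[R]_d -> R) : psd_kernel k ->
  forall n (Y : 'I_n -> 'rV[R]_d) (c : 'I_n -> R) x (lam mu : R),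
  0 <= mu^+2 * k x x + 2 * lam * mu * (\sum_i c i * k (Y i) x)
       + lam^+2 * \sum_i \sum_j c i * c j * k (Y i) (Y j).
Proof.
move=> [ksym kpsd] n Y c x lam mu.
have := kpsd n.+1 (fun i => if unlift ord0 i is Some j then Y j else x)
  (fun i => if unlift ord0 i is Some j then lam * c j else mu).
rewrite big_ord_recl big_ord_recl unlift_none.
under eq_bigr do rewrite liftK.
under [X in _ <= _ + X]eq_bigr do rewrite big_ord_recl liftK unlift_none.
under [X in _ <= _ + X]eq_bigr => i _ do under eq_bigr do rewrite !liftK.
rewrite big_split /=.
set S1 := \sum_(i < n) _.
set S2 := \sum_(i < n) _.
set S3 := \sum_(i < n) _.
have -> : S1 = lam * mu * \sum_i c i * k (Y i) x.
  by rewrite /S1 mulr_sumr; apply: eq_bigr => i _; rewrite ksym; ring.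
have -> : S2 = lam * mu * \sum_i c i * k (Y i) x.
  by rewrite /S2 mulr_sumr; apply: eq_bigr => i _; ring.
have -> : S3 = lam^+2 * \sum_i \sum_j c i * c j * k (Y i) (Y j).
  rewrite /S3 mulr_sumr; apply: eq_bigr => i _; rewrite mulr_sumr.
  by apply: eq_bigr => j _; ring.
move=> H; apply: (le_trans H); rewrite le_eqVlt; apply/orP; left; apply/eqP; ring.
Qed.

Lemma k_ge_m1 (k : 'rV[R]_d -> 'rV[R]_d -> R) : psd_kernel k ->
  forall y x, k y y = 1 -> k x x = 1 -> -1 <= k y x.
Proof.
move=> kp y x ky kx.
have := psd_ext k kp _ (fun _ : 'I_1 => y) (fun _ => 1) x 1 1.
rewrite !big_ord1 ky kx; lra.
Qed.

Lemma post_var_bounds (k : 'rV[R]_d -> 'rV[R]_d -> R) sigma X n x :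
  psd_kernel k -> (forall a b, k a b <= 1) ->
  (forall j, (1 <= j <= n)%N -> k (X j) (X j) = 1) -> k x x = 1 -> 0 < sigma ->
  sigma^+2 / (n%:R + sigma^+2) <= post_var k sigma X n x <= 1.
Proof.
move=> kp kle1 kX kx s0.
have kp' := kp; case: kp' => [ksym kpsd].
have kXi : forall i : 'I_n, k (X i.+1) (X i.+1) = 1.
  by move=> i; apply: kX; rewrite ltn_ord.
set M := Kmat k X n + (sigma^+2)%:M.
have s2 : 0 < sigma ^+ 2 by rewrite exprn_gt0.
have Apsd : forall u : 'cV[R]_n,
    0 <= \sum_i \sum_j u i 0 * u j 0 * Kmat k X n i j.
  move=> u.
  have -> : \sum_i \sum_j u i 0 * u j 0 * Kmat k X n i j =
     \sum_i \sum_j u i 0 * u j 0 * k (X i.+1) (X j.+1).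
    by apply: eq_bigr => i _; apply: eq_bigr => j _; rewrite /Kmat mxE.
  exact: (kpsd n (fun i => X i.+1) (fun i => u i 0)).
have Mu : M \in unitmx.
  rewrite -row_free_unit; apply: inj_row_free => v vM.
  have := quad_form _ (Kmat k X n) v^T (sigma ^+ 2).
  rewrite -/M trmxK vM mul0mx mxE => /esym H.
  have HA := Apsd v^T.
  have HS : 0 <= \sum_i v^T i 0 ^+ 2 by rewrite sumr_ge0 // => i _; rewrite sqr_ge0.
  have HS0 : \sum_i v^T i 0 ^+ 2 = 0.
    apply/eqP; rewrite eq_le HS andbT.
    rewrite -(ler_pM2l s2) mulr0; lra.
  apply/rowP => i; rewrite mxE.
  have := @psumr_eq0P _ _ _ (fun i => v^T i 0 ^+ 2) (fun i _ => sqr_ge0 (v^T i 0)) HS0 i isT.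
  by rewrite mxE => /eqP; rewrite sqrf_eq0 => /eqP.
set a := invmx M *m kvec k X n x.
have Ma : M *m a = kvec k X n x by rewrite mulmxA mulmxV // mul1mx.
set T := ((kvec k X n x)^T *m a) 0 0.
have pvE : post_var k sigma X n x = 1 - T by rewrite /post_var -mulmxA.
have MT : M^T = M.
  by apply/matrixP => i j; rewrite /M !mxE ksym eq_sym.
set A := \sum_i \sum_j a i 0 * a j 0 * Kmat k X n i j.
set S := \sum_i a i 0 ^+ 2.
have TAS : T = A + sigma ^+ 2 * S.
  by rewrite /T -Ma trmx_mul MT quad_form.
have TE : T = \sum_i a i 0 * k (X i.+1) x.
  rewrite /T mxE; apply: eq_bigr => i _; rewrite !mxE mulrC //.
have AT : T ^+ 2 <= A.
  have := psd_ext k kp _ (fun i => X i.+1) (fun i => a i 0) x 1 (- T).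
  rewrite -TE kx.
  have -> : \sum_i \sum_j a i 0 * a j 0 * k (X i.+1) (X j.+1) = A.
    by apply: eq_bigr => i _; apply: eq_bigr => j _; rewrite /Kmat mxE.
  move=> H; nra.
have TS : T ^+ 2 <= n%:R * S.
  rewrite TE; apply: (le_trans (sum_sq_le _ (fun i => a i 0 * k (X i.+1) x))); rewrite ler_wpM2l ?ler0n //.
  apply: ler_sum => i _.
  have h1 := kle1 (X i.+1) x.
  have h2 := k_ge_m1 k kp _ _ (kXi i) kx.
  rewrite exprMn; apply: ler_piMr; first by rewrite sqr_ge0.
  nra.
have S0 : 0 <= S by rewrite sumr_ge0 // => i _; rewrite sqr_ge0.
have n0 : 0 <= n%:R :> R by rewrite ler0n.
have T0 : 0 <= T by rewrite TAS; have := sqr_ge0 T; nra.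
rewrite pvE; apply/andP; split; last by lra.
have ns : 0 < n%:R + sigma ^+ 2 by lra.
rewrite ler_pdivrMr //.
have : T * (n%:R - (n%:R + sigma ^+ 2) * T) >= 0 by nra.
case: (ltrgt0P T) => [Tp|Tn|->]; last by lra.
  rewrite pmulr_rge0 // => H; nra.
lra.
Qed.
End Mat.

Section Aux.
Variable R : realType.

Lemma phiE (z : R) : phi z = normal_peak 1 * expR (- z ^+ 2 / 2).
Proof.
rewrite /phi normal_pdfE ?oner_eq0 //=.
by rewrite /normal_fun subr0 expr1n.
Qed.

Lemma peak_sq : 2 * pi * normal_peak (1 : R) ^+ 2 = 1.
Proof.
rewrite /normal_peak expr1n mul1r exprVn sqr_sqrtr; last by rewrite mulrn_wge0 // pi_ge0.
have hp : pi *+ 2 != 0 :> R by rewrite gt_eqF // pmulrn_lgt0 ?pi_gt0.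
by rewrite mulr_natl divff.
Qed.

Lemma peak_gt0 : 0 < normal_peak (1 : R).
Proof. by apply: normal_peak_gt0; rewrite oner_eq0. Qed.

Lemma pi_lt4 : pi < 4 :> R.
Proof. by have := @pihalf_02 R; case/andP => _ h; lra. Qed.

Lemma peak_ge13 : 1 / 3 <= normal_peak (1 : R).
Proof.
have h := peak_sq; have h0 := peak_gt0; have hp := pi_lt4; have hp2 := @pi_ge2 R.
set p := normal_peak 1 in h h0 *.
nra.
Qed.

Lemma fine01 (x : \bar R) : (0 <= x)%E -> (x <= 1)%E -> 0 <= fine x <= 1.
Proof. by case: x => //= r; rewrite !lee_fin => -> ->. Qed.

Lemma Phi01 (z : R) : 0 <= Phi z <= 1.
Proof.
rewrite /Phi; apply: fine01; first exact: measure_ge0.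
by apply: probability_le1; exact: measurable_itv.
Qed.

Lemma tail_int (z : R) : 0 < z ->
  (normal_prob 0 1 (~` `]-oo, z]) <= (expR (- z ^+ 2 / 2))%:E)%E.
Proof.
move=> z0.
have mA : measurable (`]-oo, z] : set R) by exact: measurable_itv.
have mC : measurable (~` `]-oo, z] : set R) by exact: measurableC.
set e := expR (- z ^+ 2 / 2).
have e0 : 0 <= e by exact: expR_ge0.
rewrite /normal_prob.
have mp := fun m : R => measurable_int _ (integrable_normal_pdf m 1).
apply: (@le_trans _ _ (\int[lebesgue_measure]_(x in ~` `]-oo, z]) (e%:E * (normal_pdf z 1 x)%:E))%E).
  apply: ge0_le_integral => //.
  - by move=> x _; rewrite lee_fin normal_pdf_ge0.
  - apply: (measurable_funS _ _ (mp 0)) => //.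
  - apply: (measurable_funS _ _ (measurable_funeM e%:E (mp z))) => //.
  move=> x /=; rewrite in_itv /= => /negP; rewrite -ltNge => zx.
  rewrite -EFinM lee_fin !normal_pdfE ?oner_eq0 //= /normal_fun /e.
  rewrite mulrCA ler_pM2l ?normal_peak_gt0 ?oner_eq0 // -expRD ler_expR.
  rewrite subr0 expr1n; nra.
apply: (@le_trans _ _ (\int[lebesgue_measure]_(x in [set: R]) (e%:E * (normal_pdf z 1 x)%:E))%E).
  apply: ge0_subset_integral => //.
  - exact: measurable_funeM _ (mp z).
  - by move=> x _; rewrite -EFinM lee_fin mulr_ge0 // normal_pdf_ge0.
rewrite ge0_integralZl_EFin //.
- by rewrite integral_normal_pdf mule1.
- by move=> x _; rewrite lee_fin normal_pdf_ge0.
Qed.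

Lemma Phi_tail (z : R) : 0 < z -> 1 - Phi z <= expR (- z ^+ 2 / 2).
Proof.
move=> z0.
have mA : measurable (`]-oo, z] : set R) by exact: measurable_itv.
have HC := probability_setC (normal_prob 0 1) mA.
have HT := tail_int z z0.
have h0 : (0 <= normal_prob 0 1 `]-oo, z])%E by exact: measure_ge0.
rewrite HC in HT.
have HT' : (1 - (normal_prob 0 1 `]-oo, z]) <= (expR (- z ^+ 2 / 2))%:E)%E := HT.
have h1 : (normal_prob 0 1 `]-oo, z] <= 1)%E by exact: probability_le1.
rewrite /Phi; move: HT' h0 h1.
by case: (normal_prob 0 1 `]-oo, z]) => //= r.
Qed.

Lemma expR_quarter : expR (1/4 : R) <= 4/3.
Proof.
have h := expR_ge1Dx (- (1/4) : R).
have h0 := expR_gt0 (- (1/4) : R).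
rewrite -[expR (1/4)]invrK -expRN; set q := expR _ in h h0 *.
rewrite -[4/3](@invrK R) lef_pV2 ?posrE ?invr_gt0 //; lra.
Qed.

Lemma expR_54 : expR (5/4 : R) <= 16/3.
Proof.
have -> : (5/4 : R) = 1/4 * 5%:R by rewrite mulrC -mulr_natl; lra.
rewrite expRM_natr.
have h := expR_quarter; have h0 := expR_gt0 (1/4 : R).
set q := expR _ in h h0 *.
apply: (@le_trans _ _ ((4/3)^+5)); first by rewrite lerXn2r ?nnegrE //; lra.
rewrite !exprS expr0; lra.
Qed.

Lemma expR_sq_bound (z : R) : (1 + z^+2/4)^+2 <= expR (z^+2/2).
Proof.
have -> : z^+2/2 = z^+2/4 * 2%:R by lra.
rewrite expRM_natr; apply: lerXn2r; rewrite ?nnegrE ?expR_ge0 //.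
  by have := sqr_ge0 z; lra.
exact: expR_ge1Dx.
Qed.

Lemma poly_aux (z : R) : z - 7/20 <= 518/1000 * (1 + z^+2/4)^+2.
Proof.
have g1 := sqr_ge0 (2849/4000 * z - 1); have g2 := sqr_ge0 (z^+2 - 3/2); lra.
Qed.

Lemma ca_val : (c_alpha - 1 : R) = 328/1000.
Proof. rewrite /c_alpha. lra. Qed.

Lemma tail_ineq (z p sb : R) : 0 < z -> 7/20 <= p -> 79/50 <= sb ->
  z * (1 - Phi z) - p * expR (- z^+2/2) <= (c_alpha - 1) * sb.
Proof.
move=> z0 hp hsb.
have ht := Phi_tail z z0; have h01 := Phi01 z.
set e := expR (- z^+2/2) in ht *.
have e0 : 0 < e by exact: expR_gt0.
have hE := expR_sq_bound z.
have eE : e * expR (z^+2/2) = 1 by rewrite /e -expRD mulNr addNr expR0.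
set E := expR (z^+2/2) in hE eE.
clearbody e E.
have h1 : z * (1 - Phi z) - p * e <= (z - 7/20) * e.
  have g1 : z * (1 - Phi z) <= z * e by apply: ler_wpM2l => //; exact: ltW.
  have g2 : 7/20 * e <= p * e by apply: ler_wpM2r => //; exact: ltW.
  lra.
apply: (le_trans h1).
have hpoly := poly_aux z.
have hA : (z - 7/20) * e <= 518/1000 * (1 + z^+2/4)^+2 * e.
  by apply: ler_wpM2r => //; exact: ltW.
have hB : 518/1000 * (1 + z^+2/4)^+2 * e <= 518/1000 * E * e.
  apply: ler_wpM2r; first exact: ltW.
  by apply: ler_wpM2l; [lra | exact: hE].
have hC : 518/1000 * E * e = 518/1000 by rewrite -mulrA [E * e]mulrC eE mulr1.
rewrite hC in hB.
clear -hA hB hsb.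
rewrite ca_val; lra.
Qed.
Lemma peak_ge : 7/20 <= normal_peak (1 : R).
Proof.
have h := peak_sq; have h0 := peak_gt0; have hp := pi_lt4; have hp2 := @pi_ge2 R.
set p := normal_peak 1 in h h0 *.
have h8 : 1 < 8 * p ^+ 2 by nra.
nra.
Qed.

Lemma phi0E : phi (0 : R) = normal_peak 1.
Proof. by rewrite phiE expr0n /= oppr0 mul0r expR0 mulr1. Qed.

Definition EIf (xi m s : R) := (xi - m) * Phi ((xi - m) / s) + s * phi ((xi - m) / s).

Lemma partA (xi mb sbar sb : R) : 0 < sbar -> 79/50 <= sb ->
  xi - mb <= EIf xi mb sbar + (c_alpha - 1) * sb * sbar.
Proof.
move=> s0 hsb; rewrite /EIf.
set a := xi - mb.
have h01 := Phi01 (a / sbar).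
have hph := normal_pdf_ge0 0 1 (a / sbar).
have ca := ca_val.
case: (lerP a 0) => ha.
  have : 0 <= sbar * phi (a / sbar) by apply: mulr_ge0; [exact: ltW | exact: hph].
  have : a <= a * Phi (a / sbar) by rewrite -[X in X <= _]mulr1; apply: ler_wnM2l; lra.
  have : 0 <= (c_alpha - 1) * sb * sbar by rewrite ca; apply: mulr_ge0; [lra|exact: ltW].
  lra.
set z := a / sbar.
have z0 : 0 < z by rewrite /z divr_gt0.
have az : a = z * sbar by rewrite /z divfK // gt_eqF.
have ht := tail_ineq z (normal_peak 1) sb z0 peak_ge hsb.
rewrite -phiE in ht.
have : sbar * (z * (1 - Phi z) - phi z) <= sbar * ((c_alpha - 1) * sb).
  by apply: ler_wpM2l; [exact: ltW | exact: ht].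
rewrite az; clearbody z; clear az; move=> h; nra.
Qed.

Lemma partB (xi mt st sm cmu n s2 : R) : 0 < st -> st <= 1 -> 0 < sm -> 0 < s2 ->
  0 <= n -> s2 / (n + s2) <= sm ^+ 2 -> sm * phi 0 <= EIf xi mt st ->
  cmu = Num.sqrt (ln ((n + s2) / s2)) ->
  mt - xi + EIf xi mt st <= (cmu + phi 0) * st.
Proof.
move=> st0 st1 sm0 s20 n0 hsm hEI hcmu.
move: hEI; rewrite /EIf phi0E; set a := xi - mt; set z := a / st.
have az : a = z * st by rewrite /z divfK // gt_eqF.
have h01 := Phi01 z.
rewrite phiE; set p := normal_peak 1; set E := expR (- z ^+ 2 / 2).
have p0 : 0 < p by exact: peak_gt0.
have E0 : 0 < E by exact: expR_gt0.
have E1 : E <= 1 by rewrite /E expR_le1; have := sqr_ge0 z; lra.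
have cmu0 : 0 <= cmu by rewrite hcmu sqrtr_ge0.
have f2 : st * (p * E) <= st * p.
  by apply: ler_wpM2l; [exact: ltW | rewrite -[X in _ <= X]mulr1; apply: ler_wpM2l; [exact: ltW | exact: E1]].
have f3 : 0 <= cmu * st by apply: mulr_ge0 => //; exact: ltW.
have aE : mt - xi = - a by rewrite /a opprB.
case: (lerP 0 a) => ha hEI.
  have f1 : a * Phi z <= a.
    by rewrite -[X in _ <= X]mulr1; apply: ler_wpM2l => //; case/andP: h01.
  lra.
have f1 : a * Phi z <= 0.
  by apply: mulr_le0_ge0; [exact: ltW | case/andP: h01].
suff : - a <= cmu * st by lra.
have hsmE : sm <= E.
  have : sm * p <= p * E.
    apply: (le_trans hEI).
    have : st * (p * E) <= p * E by rewrite -[X in _ <= X]mul1r; apply: ler_wpM2r => //; rewrite mulr_ge0 // ltW.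
    lra.
  by rewrite [p * E]mulrC ler_pM2r.
have hsm2 : sm ^+ 2 <= expR (- z ^+ 2).
  have -> : - z ^+ 2 = - z ^+ 2 / 2 * 2%:R by field.
  rewrite expRM_natr; apply: lerXn2r; rewrite ?nnegrE; [exact: ltW | exact: expR_ge0 | exact: hsmE].
have hq : s2 / (n + s2) <= expR (- z ^+ 2) by apply: le_trans hsm2.
have nsp : 0 < n + s2 by lra.
have hq' : expR (z ^+ 2) <= (n + s2) / s2.
  rewrite -[z ^+ 2]opprK expRN -invf_div lef_pV2 ?posrE ?expR_gt0 ?divr_gt0 //.
have hz2 : z ^+ 2 <= ln ((n + s2) / s2).
  rewrite -[X in X <= _]expRK ler_ln ?posrE ?expR_gt0 ?divr_gt0 //.
have hz : `|z| <= cmu.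
  by rewrite hcmu -sqrtr_sqr; apply: ler_wsqrtr.
have : - z <= cmu by have := ler_norm (- z); rewrite normrN; lra.
move=> h; rewrite az -mulNr; apply: ler_wpM2r; [exact: ltW | lra].
Qed.
End Aux.

Section Aux3.
Variable R : realType.
Variable d : nat.

Lemma beta_ge (card : nat) (delta : R) (t : nat) :
  1 <= card%:R :> R -> 0 < delta -> delta < 1 -> (1 <= t)%N -> 5/2 <= beta card delta t.
Proof.
move=> hc d0 d1 t1.
rewrite /beta /pi_t.
have hp := @pi_ge2 R.
have ht : 1 <= t%:R :> R by rewrite ler1n.
have hpt : 4 <= pi ^+ 2 * t%:R ^+ 2 :> R.
  have h1 : 4 <= pi ^+ 2 :> R by nra.
  have h2 : 1 <= t%:R ^+ 2 :> R by nra.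
  nra.
set P := pi ^+ 2 * t%:R ^+ 2 in hpt *.
have hY : 16/3 <= 8 * card%:R * (P / 6) by nra.
set Y := 8 * card%:R * (P / 6) in hY *.
have hX : 16/3 <= Y / delta.
  apply: (le_trans hY); rewrite ler_pdivlMr //; nra.
have hl : 5/4 <= ln (Y / delta).
  rewrite -[X in X <= _](@expRK R) ler_ln ?posrE ?expR_gt0 //.
    exact: le_trans (expR_54 R) hX.
  apply: lt_le_trans hX; lra.
lra.
Qed.

Lemma bigmin_seq (F : nat -> R) (x0 : R) (s : seq nat) :
  \big[Num.min/x0]_(i <- s) F i = x0 \/
  exists2 i, i \in s & \big[Num.min/x0]_(i <- s) F i = F i.
Proof.
elim: s => [|a s IH]; first by left; rewrite big_nil.
rewrite big_cons; case: (leP (F a) (\big[Num.min/x0]_(j <- s) F j)) => h.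
  by right; exists a; rewrite ?mem_head //; apply/min_idPl.
case: IH => [->|[i hi ->]]; first by left.
by right; exists i => //; rewrite in_cons hi orbT.
Qed.

Lemma incumbent_attained k sigma (X : nat -> 'rV[R]_d) y n :
  exists m, (1 <= m <= maxn n 1)%N /\
    incumbent k sigma X y n = post_mean k sigma X y n (X m).
Proof.
rewrite /incumbent.
case: (bigmin_seq (fun i => post_mean k sigma X y n (X i)) (post_mean k sigma X y n (X 1%N)) (index_iota 1 n.+1)) => [->|[i hi ->]].
  by exists 1%N; split => //; rewrite leq_maxr.
exists i; split => //; move: hi; rewrite mem_index_iota => /andP [h1 h2].
by rewrite h1 /= leq_max -ltnS h2.
Qed.

Lemma post_mean0 k sigma (X : nat -> 'rV[R]_d) y x :
  post_mean k sigma X y 0 x = 0.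
Proof. by rewrite /post_mean mxE big_ord0. Qed.

End Aux3.

Theorem mainTheorem6 (R : realType) (d : nat) (r : R) (C : set 'rV[R]_d)
  (k : 'rV[R]_d -> 'rV[R]_d -> R) (L : R) (f : 'rV[R]_d -> R) (xstar : 'rV[R]_d)
  (sigma : R) (X : nat -> 'rV[R]_d) (eps y : nat -> R) (delta : R) (t : nat)
  (Ct : seq 'rV[R]_d) (proj : 'rV[R]_d -> 'rV[R]_d) :
  (* setting *)
  (0 < d)%N -> 0 < r ->
  (forall x, C x -> forall i, 0 <= x 0 i <= r) ->
  compact C ->
  psd_kernel k ->
  (forall x x', k x x' <= 1) ->
  (forall x, C x -> k x x = 1) ->
  L >= 1 / (r * d%:R) ->
  (forall x x', C x -> C x' -> `|f x - f x'| <= L * l1dist x x') ->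
  C xstar -> (forall x, C x -> f xstar <= f x) ->
  0 < sigma ->
  (forall i, y i = f (X i) + eps i) ->
  (* GP-EI with BSPMI: x_s in argmax_C EI_{s-1} *)
  (forall s, (1 <= s <= t)%N -> C (X s)) ->
  (forall s, (2 <= s <= t)%N -> forall x, C x ->
      EI k sigma X y s.-1 x <= EI k sigma X y s.-1 (X s)) ->
  0 < delta < 1 ->
  (1 <= t)%N ->
  (* discretization C_t and [x]_t *)
  (forall c, c \in Ct -> C c) -> uniq Ct ->
  (size Ct)%:R = (L * r * d%:R * t%:R ^+ 2) ^+ d ->
  (forall x, C x -> proj x \in Ct /\ l1dist x (proj x) <= 1 / (L * t%:R ^+ 2) /\
      (forall c, c \in Ct -> l1dist x (proj x) <= l1dist x c)) ->
  (* event E^r(t) *)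
  (let bt := beta (size Ct) delta t in
   (forall c, c \in Ct -> `|f c - post_mean k sigma X y t.-1 c|
                          <= Num.sqrt bt * post_sd k sigma X t.-1 c) /\
   `|f (X t) - post_mean k sigma X y t.-1 (X t)|
      <= Num.sqrt bt * post_sd k sigma X t.-1 (X t) /\
   ((1 < t)%N -> `|f (X t.-1) - post_mean k sigma X y t.-1 (X t.-1)|
      <= Num.sqrt bt * post_sd k sigma X t.-1 (X t.-1))) ->
  (* conclusion *)
  let bt := beta (size Ct) delta t in
  f (X t) - f xstar <=
    (c_mu sigma t + phi 0 + 2 * Num.sqrt bt) * post_sd k sigma X t.-1 (X t)
    + c_alpha * Num.sqrt bt * post_sd k sigma X t.-1 (proj xstar)
    + 1 / (t%:R ^+ 2).
Proof.
move=> d0 r0 Cbox Ccomp kp kle1 kdiag Lge Lip xsC xsmin s0 yE XC EIarg dlt t1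
  CtC Ctu Ctsize projP Er.
rewrite [is_true _]/=.
have [ErC [Ert _]] := Er.
clear Er.
set sb := Num.sqrt (beta (size Ct) delta t) in ErC Ert *.
case/andP: dlt => dl0 dl1.
have dpos : 0 < d%:R :> R by rewrite ltr0n.
have rd : 0 < r * d%:R by apply: mulr_gt0.
have Lpos : 0 < L by apply: lt_le_trans Lge; rewrite divr_gt0 // ltr01.
have Lrd : 1 <= L * r * d%:R by move: Lge; rewrite ler_pdivrMr // mulrA.
have tR : 1 <= t%:R :> R by rewrite ler1n.
have card1 : 1 <= (size Ct)%:R :> R.
  rewrite Ctsize; apply: exprn_ege1.
  have : 1 <= t%:R ^+ 2 :> R by nra.
  nra.
have hbeta := @beta_ge R _ _ _ card1 dl0 dl1 t1.
have hsb : 79/50 <= sb.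
  have e : 79/50 = Num.sqrt ((79/50)^+2) :> R.
    by rewrite sqrtr_sqr ger0_norm //; lra.
  rewrite e /sb; apply: ler_wsqrtr; lra.
have [xbCt [xbd _]] := projP xstar xsC.
have xbC := CtC _ xbCt.
have hlip : f (proj xstar) - f xstar <= 1 / t%:R ^+ 2.
  have h := Lip xstar (proj xstar) xsC xbC.
  have h2 : L * l1dist xstar (proj xstar) <= L * (1 / (L * t%:R ^+ 2)).
    by apply: ler_wpM2l; [exact: ltW | exact: xbd].
  have t0 : t%:R ^+ 2 != 0 :> R by rewrite expf_neq0 // pnatr_eq0 -lt0n.
  have h3 : L * (1 / (L * t%:R ^+ 2)) = 1 / t%:R ^+ 2.
    by rewrite !mul1r invfM mulrA mulfV ?gt_eqF // mul1r.
  have h4 := ler_norm (f (proj xstar) - f xstar); rewrite distrC in h4.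
  lra.
have XCn : forall j, (1 <= j <= t.-1)%N -> C (X j).
  move=> j /andP [a b]; apply: XC; rewrite a /=; exact: leq_trans b (leq_pred t).
have kX : forall j, (1 <= j <= t.-1)%N -> k (X j) (X j) = 1.
  by move=> j hj; apply: kdiag; exact: XCn.
have sdP : forall x, C x -> 0 < post_sd k sigma X t.-1 x /\
    post_sd k sigma X t.-1 x <= 1 /\
    sigma ^+ 2 / ((t.-1)%:R + sigma ^+ 2) <= post_sd k sigma X t.-1 x ^+ 2.
  move=> x Cx.
  have /andP [h1 h2] := @post_var_bounds R d k sigma X t.-1 x kp kle1 kX (kdiag x Cx) s0.
  have hp : 0 < sigma ^+ 2 / ((t.-1)%:R + sigma ^+ 2).
    apply: divr_gt0; first exact: exprn_gt0.
    have : 0 < sigma ^+ 2 by exact: exprn_gt0.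
    have : 0 <= (t.-1)%:R :> R by exact: ler0n.
    lra.
  have v0 : 0 < post_var k sigma X t.-1 x by exact: lt_le_trans hp h1.
  rewrite /post_sd; split; first by rewrite sqrtr_gt0.
  split; first by rewrite -sqrtr1; apply: ler_wsqrtr.
  by rewrite sqr_sqrtr // ltW.
have [sb0 [sb1 sb2]] := sdP _ xbC.
have hb := ErC _ xbCt; rewrite ler_norml in hb; case/andP: hb => hb1 hb2.
have hbt := Ert; rewrite ler_norml in hbt; case/andP: hbt => ht1 ht2.
have XtC : C (X t) by apply: XC; rewrite t1 leqnn.
have [st0 [st1 st2]] := sdP _ XtC.
have cmu0 : 0 <= c_mu sigma t by rewrite /c_mu sqrtr_ge0.
have phi00 : 0 <= phi (0 : R) by rewrite /phi normal_pdf_ge0.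
have ca := ca_val R.
have g0 : 0 <= sb * post_sd k sigma X t.-1 (X t).
  by apply: mulr_ge0; [lra | exact: ltW].
case: (leqP t 1) => ht.
  have tE : t = 1%N by apply/eqP; rewrite eqn_leq ht t1.
  have hm : forall x, post_mean k sigma X y t.-1 x = 0.
    by move=> x; rewrite tE post_mean0.
  rewrite !hm in hb1 ht2.
  have g1 : 0 <= (c_mu sigma t + phi 0 + sb) * post_sd k sigma X t.-1 (X t).
    by apply: mulr_ge0; [lra | exact: ltW].
  have g2 : 0 <= (c_alpha - 1) * sb * post_sd k sigma X t.-1 (proj xstar).
    by apply: mulr_ge0; [rewrite ca; apply: mulr_ge0; lra | exact: ltW].
  lra.
have [m [hm1 hmE]] := @incumbent_attained R d k sigma X y t.-1.
have mt : (1 <= m <= t)%N.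
  case/andP: hm1 => a b; rewrite a /=; apply: leq_trans b _.
  by rewrite geq_max leq_pred t1.
have Cm := XC m mt.
have [sm0 [sm1 sm2]] := sdP _ Cm.
have EIeq : forall x, EI k sigma X y t.-1 x =
   @EIf R (incumbent k sigma X y t.-1) (post_mean k sigma X y t.-1 x)
       (post_sd k sigma X t.-1 x) by [].
have hEIm := EIarg t _ (X m) Cm.
have hEIb := EIarg t _ (proj xstar) xbC.
rewrite ht leqnn /= in hEIm hEIb.
have hEIm' := hEIm isT; have hEIb' := hEIb isT; clear hEIm hEIb.
rewrite !EIeq in hEIm' hEIb'.
have EIm : @EIf R (incumbent k sigma X y t.-1) (post_mean k sigma X y t.-1 (X m))
   (post_sd k sigma X t.-1 (X m)) = post_sd k sigma X t.-1 (X m) * phi 0.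
  by rewrite /EIf hmE subrr !mul0r add0r.
rewrite EIm in hEIm'.
have cmuE : c_mu sigma t = Num.sqrt (ln (((t.-1)%:R + sigma ^+ 2) / sigma ^+ 2)).
  rewrite /c_mu phi0E peak_sq mul1r.
  have -> : t%:R - 1 = (t.-1)%:R :> R.
    have : t%:R = (t.-1)%:R + 1 :> R by rewrite natr1 prednK.
    lra.
  by [].
have s20 : 0 < sigma ^+ 2 by exact: exprn_gt0.
have hB := @partB R _ _ _ _ _ _ _ st0 st1 sm0 s20 (ler0n _ _) sm2 hEIm' cmuE.
have hA := @partA R (incumbent k sigma X y t.-1) (post_mean k sigma X y t.-1 (proj xstar)) _ _ sb0 hsb.
lra.
Qed.
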